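(* Let $A \in \mathbb{R}^{m \times r}$, $b \in \mathbb{R}^m$, $P = \{ x \in \mathbb{R}^r \mid Ax \ge b\}$, let $x \in P$, and let $O \subset \mathbb{R}^r$ be a closed orthant with $x \in O$. Then $x$ is convex-conformally non-decomposable in $P$ if and only if $x$ is a vertex of $P \cap O$.
   Context: For $x \in \mathbb{R}^n$, $\operatorname{sign}(x) \in \{-,0,+\}^n$ is obtained by applying the sign function componentwise; the relations $0<-$, $0<+$ induce a componentwise partial order on $\{-,0,+\}^n$. For $X \in \{-,0,+\}^r$, the corresponding closed orthant is $O = \{ x \in \mathbb{R}^r \mid \operatorname{sign}(x) \le X\}$. A vector $x \in P$ is convex-conformally non-decomposable in $P$ if for all $x^1,x^2 \in P$ with $\operatorname{sign}(x^1),\operatorname{sign}(x^2) \le \operatorname{sign}(x)$ and all $0<\lambda<1$, $x = \lambda x^1 + (1-\lambda)x^2$ implies $x^1 = x^2$. For a polyhedron $Q$, $x \in Q$ is a vertex if for all $x^1, x^2 \in Q$ and $0<\lambda<1$, $x = \lambda x^1 + (1-\lambda) x^2$ implies $x^1 = x^2$. *)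

(* Defs.v *)
From HB Require Import structures.
From mathcomp Require Import all_boot all_order all_algebra.
From mathcomp Require Import reals.
Set Implicit Arguments. Unset Strict Implicit. Unset Printing Implicit Defensive.
Import Order.TTheory GRing.Theory Num.Theory.
Local Open Scope ring_scope.

Inductive sgn := SNeg | SZero | SPos.

Definition sgn_le (s t : sgn) : Prop := s = SZero \/ s = t.

Section Defs.
Variable R : realType.

Definition sign_of (x : R) : sgn :=
  if x < 0 then SNeg else if x == 0 then SZero else SPos.

Definition vsign (r : nat) (x : 'cV[R]_r) : 'I_r -> sgn := fun i => sign_of (x i 0).

Definition vsgn_le (r : nat) (S T : 'I_r -> sgn) : Prop := forall i, sgn_le (S i) (T i).

Definition polyhedron (m r : nat) (A : 'M[R]_(m, r)) (b : 'cV[R]_m) (x : 'cV[R]_r) : Prop :=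
  forall i, b i 0 <= (A *m x) i 0.

Definition orthant (r : nat) (X : 'I_r -> sgn) (x : 'cV[R]_r) : Prop :=
  vsgn_le (vsign x) X.

Definition cc_nondecomposable (r : nat) (P : 'cV[R]_r -> Prop) (x : 'cV[R]_r) : Prop :=
  P x /\
  forall (x1 x2 : 'cV[R]_r) (lam : R),
    P x1 -> P x2 -> vsgn_le (vsign x1) (vsign x) -> vsgn_le (vsign x2) (vsign x) ->
    0 < lam -> lam < 1 -> x = lam *: x1 + (1 - lam) *: x2 -> x1 = x2.

Definition is_vertex (r : nat) (Q : 'cV[R]_r -> Prop) (x : 'cV[R]_r) : Prop :=
  Q x /\
  forall (x1 x2 : 'cV[R]_r) (lam : R),
    Q x1 -> Q x2 -> 0 < lam -> lam < 1 -> x = lam *: x1 + (1 - lam) *: x2 -> x1 = x2.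
End Defs.

(* Main.v *)
Require Import Defs.
From mathcomp Require Import all_boot all_order all_algebra.
From mathcomp Require Import reals.
From mathcomp Require Import lra.
Import Order.TTheory GRing.Theory Num.Theory.
Local Open Scope ring_scope.

Lemma sgn_le_trans a b c : sgn_le a b -> sgn_le b c -> sgn_le a c.
Proof. by rewrite /sgn_le; case=> ->; [left|]. Qed.

Lemma sign_cases (R : realType) (a : R) :
  (sign_of a = SNeg /\ a < 0) \/ (sign_of a = SZero /\ a = 0) \/ (sign_of a = SPos /\ 0 < a).
Proof.
rewrite /sign_of; case: ltrP => h; first by left.
case: eqP => e; first by right; left.
right; right; split => //; rewrite lt_neqAle h andbT; apply/eqP => E; exact: e (esym E).
Qed.

Lemma comp_lemma (R : realType) (a b lam : R) (X : sgn) :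
  sgn_le (sign_of a) X -> sgn_le (sign_of b) X -> sgn_le (sign_of (lam * a + (1 - lam) * b)) X ->
  0 < lam -> lam < 1 -> sgn_le (sign_of a) (sign_of (lam * a + (1 - lam) * b)).
Proof.
move=> ha hb hc l0 l1.
have [[sa a0]|[[sa a0]|[sa a0]]] := sign_cases _ a; last first.
- have [[sb b0]|[[sb b0]|[sb b0]]] := sign_cases _ b.
  + by move: hb ha; rewrite sa sb /sgn_le; case=> // <-; case.
  + right; rewrite sa; have [[sc c0]|[[sc c0]|[sc c0]]] := sign_cases _ (lam * a + (1 - lam) * b) => //; exfalso; clear -a0 b0 c0 l0 l1; rewrite b0 in c0; nra.
  + right; rewrite sa; have [[sc c0]|[[sc c0]|[sc c0]]] := sign_cases _ (lam * a + (1 - lam) * b) => //; exfalso; clear -a0 b0 c0 l0 l1; nra.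
- by rewrite sa; left.
- have [[sb b0]|[[sb b0]|[sb b0]]] := sign_cases _ b.
  + right; rewrite sa; have [[sc c0]|[[sc c0]|[sc c0]]] := sign_cases _ (lam * a + (1 - lam) * b) => //; exfalso; clear -a0 b0 c0 l0 l1; nra.
  + right; rewrite sa; have [[sc c0]|[[sc c0]|[sc c0]]] := sign_cases _ (lam * a + (1 - lam) * b) => //; exfalso; clear -a0 b0 c0 l0 l1; rewrite b0 in c0; nra.
  + by move: hb ha; rewrite sa sb /sgn_le; case=> // <-; case.
Qed.

Theorem proposition6 (R : realType) (m r : nat) (A : 'M[R]_(m, r)) (b : 'cV[R]_m)
    (x : 'cV[R]_r) (X : 'I_r -> sgn) :
  polyhedron A b x -> orthant X x ->
  (cc_nondecomposable (polyhedron A b) x <->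
   is_vertex (fun y => polyhedron A b y /\ orthant X y) x).
Proof.
move=> Px Ox; split.
- case=> _ H; split => // x1 x2 lam [P1 O1] [P2 O2] l0 l1 E.
  have Hs : forall (y1 y2 : 'cV[R]_r) (lam : R), 0 < lam -> lam < 1 -> orthant X y1 -> orthant X y2 ->
      x = lam *: y1 + (1 - lam) *: y2 -> vsgn_le (vsign y1) (vsign x).
    move=> y1 y2 mu m0 m1 o1 o2 E' i; rewrite /vsign E' !mxE.
    apply: comp_lemma m0 m1; [exact: o1|exact: o2|].
    by move: (Ox i); rewrite /vsign E' !mxE.
  apply: (H x1 x2 lam) => //; first exact: (Hs x1 x2 lam).
  apply: (Hs x2 x1 (1 - lam)) => //; [by rewrite subr_gt0|by rewrite ltrBlDr ltrDl|].
  by rewrite E addrC opprB addrCA subrr addr0.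
- case=> _ H; split => // x1 x2 lam P1 P2 s1 s2 l0 l1 E.
  apply: (H x1 x2 lam) => //; split => // i; exact: sgn_le_trans (s1 i) (Ox i) || exact: sgn_le_trans (s2 i) (Ox i).
Qed.
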